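(* Let $\rho:\mathfrak{k}\to\mathrm{End}(\mathbb{C}^s)$ be a generalized spin representation of $\mathfrak{k}$, i.e. a Lie algebra representation such that $\rho(X_i)^2=-\frac14\,\mathrm{id}_s$ for all $i=1,\dots,n$. Write $[A,B]=AB-BA$ and $\{A,B\}=AB+BA$. Then for all $1\le i\neq j\le n$: $[\rho(X_i),\rho(X_j)]=0$ if $a_{ij}=0$ (i.e. $i,j$ do not form an edge of the Dynkin diagram), and $\{\rho(X_i),\rho(X_j)\}=0$ if $a_{ij}=-1$ (i.e. $i,j$ form an edge of the Dynkin diagram).
   Context: Let $A=(a_{ij})_{1\le i,j\le n}$ be a symmetrizable generalized Cartan matrix that is simply laced (all off-diagonal entries are $0$ or $-1$); its Dynkin diagram has vertices $1,\dots,n$ and an edge between $i\neq j$ iff $a_{ij}=-1$. Let $\mathfrak{g}=\mathfrak{g}(A)$ be the split real Kac–Moody algebra with Chevalley generators $e_i,f_i$ and Cartan subalgebra $\mathfrak h$, and let $\omega$ be its Chevalley involution ($\omega(e_i)=-f_i$, $\omega(f_i)=-e_i$, $\omega(h)=-h$ for $h\in\mathfrak h$). The maximal compact subalgebra is $\mathfrak{k}=\mathrm{Fix}(\omega)$. The Berman generators are $X_i:=e_i-f_i\in\mathfrak k$; $\mathfrak{k}$ is isomorphic to the real Lie algebra generated by $X_1,\dots,X_n$ subject to the relations $[X_i,[X_i,X_j]]=-X_j$ if $a_{ij}=-1$ and $[X_i,X_j]=0$ if $a_{ij}=0$. *)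

(* Defs.v *)
From HB Require Import structures.
From mathcomp Require Import all_boot all_order all_algebra.
From mathcomp Require Import complex.
From mathcomp Require Import reals.
Set Implicit Arguments. Unset Strict Implicit. Unset Printing Implicit Defensive.
Import Order.TTheory GRing.Theory Num.Theory.
Local Open Scope ring_scope.

Definition is_GCM (n : nat) (A : 'M[int]_n) : Prop :=
  (forall i, A i i = 2) /\
  (forall i j, i != j -> A i j <= 0) /\
  (forall i j, A i j = 0 <-> A j i = 0).

Definition symmetrizable (n : nat) (A : 'M[int]_n) : Prop :=
  exists d : 'I_n -> rat, (forall i, 0 < d i) /\
    (forall i j, d i * (A i j)%:~R = d j * (A j i)%:~R).

Definition simply_laced (n : nat) (A : 'M[int]_n) : Prop :=
  forall i j, i != j -> A i j = 0 \/ A i j = -1.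

Definition mxcomm (C : nzRingType) (s : nat) (P Q : 'M[C]_s) : 'M[C]_s :=
  P *m Q - Q *m P.
Definition mxacomm (C : nzRingType) (s : nat) (P Q : 'M[C]_s) : 'M[C]_s :=
  P *m Q + Q *m P.

(* A representation rho : k -> End(C^s) of the maximal compact subalgebra
   k = Fix(omega), presented (Berman) by generators X_1..X_n and relations
   [X_i,[X_i,X_j]] = -X_j if a_ij = -1 and [X_i,X_j] = 0 if a_ij = 0 (i <> j).
   Since k is the real Lie algebra with this presentation, a real Lie algebra
   representation of k on C^s is the same as the data of the images
   rho i = rho(X_i) satisfying the defining relations. *)
Definition berman_rep (n : nat) (A : 'M[int]_n) (C : nzRingType) (s : nat)
  (rho : 'I_n -> 'M[C]_s) : Prop :=
  forall i j, i != j ->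
    (A i j = -1 -> mxcomm (rho i) (mxcomm (rho i) (rho j)) = - rho j) /\
    (A i j = 0 -> mxcomm (rho i) (rho j) = 0).

Definition gen_spin (n : nat) (R : realType) (s : nat)
  (rho : 'I_n -> 'M[R[i]]_s) : Prop :=
  forall i, rho i *m rho i = (- (4%:R)^-1) %:M.

(* Main.v *)
Require Import Defs.
From HB Require Import structures.
From mathcomp Require Import all_boot all_order all_algebra.
From mathcomp Require Import complex.
From mathcomp Require Import reals.
Import Order.TTheory GRing.Theory Num.Theory.
Local Open Scope ring_scope.

Lemma aux (F : fieldType) s (a b : 'M[F]_s) (c : F) : c != 0 -> (2%:R : F) != 0 ->
  4%:R * c + 1 = 0 -> a *m a = c%:M ->
  a *m (a *m b - b *m a) - (a *m b - b *m a) *m a = - b -> a *m b + b *m a = 0.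
Proof.
move=> c0 t0 hc ha H.
have key : forall P : 'M[F]_s, a *m P = 0 -> P = 0.
  move=> P hP; rewrite -[P]scale1r -(mulVf c0) -scalerA -[c *: P]mul_scalar_mx -ha -mulmxA hP mulmx0 scaler0.
  by [].
apply: key.
have e1 : a *m (a *m b) = c *: b by rewrite mulmxA ha mul_scalar_mx.
have e2 : b *m a *m a = c *: b by rewrite -mulmxA ha mul_mx_scalar.
move: H; rewrite !mulmxDr !mulmxDl !mulmxN !mulNmx e1 !mulmxA e2 -!mulmxA.
set X := a *m (b *m a) => H.
have HX : X + X = c *: b + c *: b + b.
  apply: (addIr (- b)); rewrite addrK -H !opprD !opprK.
  by rewrite addrACA addNKr [X + (_ - X)]addrC subrK.
set Y := c *: b + X.
have HY : Y *+ 2 = 0.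
  have -> : Y *+ 2 = (4%:R * c + 1) *: b.
    rewrite mulr2n /Y addrACA HX scalerDl scale1r -scalerA scaler_nat.
    by rewrite !mulrS mulr0n addr0 !addrA.
  by rewrite hc scale0r.
by rewrite -[Y]scale1r -(mulVf t0) -scalerA scaler_nat HY scaler0.
Qed.

Theorem proposition2p3 (n : nat) (A : 'M[int]_n) (R : realType) (s : nat)
  (rho : 'I_n -> 'M[R[i]]_s) :
  is_GCM A -> symmetrizable A -> simply_laced A ->
  berman_rep A rho -> gen_spin rho ->
  forall i j : 'I_n, i != j ->
    (A i j = 0 -> mxcomm (rho i) (rho j) = 0) /\
    (A i j = -1 -> mxacomm (rho i) (rho j) = 0).
Proof.
move=> _ _ _ hB hS i j hij; have [h1 h0] := hB i j hij.
split => // hA; have {h1} H := h1 hA.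
have c0 : (- (4%:R)^-1 : R[i]) != 0 by rewrite oppr_eq0 invr_eq0 pnatr_eq0.
have t0 : (2%:R : R[i]) != 0 by rewrite pnatr_eq0.
have hc : 4%:R * (- (4%:R)^-1 : R[i]) + 1 = 0.
  by rewrite mulrN divff ?pnatr_eq0 // addNr.
exact: (@aux _ _ (rho i) (rho j) _ c0 t0 hc (hS i) H).
Qed.
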